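(* Let $S$ be a field and $X,Y\in\mathbb{M}_2(S)$ with determinants $\delta,\delta'$ and supertraces $\tau=\operatorname{str}(X)$, $\tau'=\operatorname{str}(Y)$. Then $[X,Y]\notin\mathrm{GL}_2(S)$ if and only if $$\delta\tau'^2+\delta'\tau^2+\operatorname{tr}(XY)\,\tau'\tau=\operatorname{str}(XY)\operatorname{str}(YX).$$ Moreover, $X$ is a scalar matrix if and only if this equation holds for all $Y\in\mathbb{M}_2(S)$.
   Context: $[X,Y]=XY-YX$. For $M=(m_{ij})\in\mathbb{M}_2(S)$, the supertrace is $\operatorname{str}(M)=m_{11}-m_{22}$. *)

(* Defs.v *)
From HB Require Import structures.
From mathcomp Require Import all_boot all_order all_algebra.
Set Implicit Arguments. Unset Strict Implicit. Unset Printing Implicit Defensive.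
Import GRing.Theory.
Local Open Scope ring_scope.

Definition str (S : ringType) (M : 'M[S]_2) : S := M ord0 ord0 - M ord_max ord_max.

Definition commx (S : ringType) (X Y : 'M[S]_2) : 'M[S]_2 := X *m Y - Y *m X.

(* Main.v *)
Require Import Defs.
From HB Require Import structures.
From mathcomp Require Import all_boot all_order all_algebra.
From Stdlib Require Import Ring.
Import GRing.Theory.
Local Open Scope ring_scope.

Section AbsRing.
Variables (T : Type) (z o : T) (ad mu : T -> T -> T) (op : T -> T).
Hypothesis Rth : ring_theory z o ad mu (fun x y => ad x (op y)) op eq.
Add Ring AbsR : Rth.
Local Notation "x +' y" := (ad x y) (at level 50, left associativity).
Local Notation "x -' y" := (ad x (op y)) (at level 50, left associativity).
Local Notation "x *' y" := (mu x y) (at level 40, left associativity).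
Local Notation "-' x" := (op x) (at level 35).
Lemma keyA (a b c d e f g h : T) :
  (a *' d -' b *' c) *' ((e -' h) *' (e -' h)) +'
  (e *' h -' f *' g) *' ((a -' d) *' (a -' d)) +'
  (a *' e +' b *' g +' (c *' f +' d *' h)) *' (e -' h) *' (a -' d) -'
  (a *' e +' b *' g -' (c *' f +' d *' h)) *' (e *' a +' f *' c -' (g *' b +' h *' d)) =
  -'
  ((a *' e +' b *' g -' (e *' a +' f *' c)) *' (c *' f +' d *' h -' (g *' b +' h *' d)) -'
   (a *' f +' b *' h -' (e *' b +' f *' d)) *' (c *' e +' d *' g -' (g *' a +' h *' c))).
Proof. ring. Qed.
Lemma kb (a b c d : T) : ((a *' z +' b *' o -' (z *' a +' z *' c)) *' (c *' z +' d *' z -' (o *' b +' z *' d)) -' (a *' z +' b *' z -' (z *' b +' z *' d)) *' (c *' z +' d *' o -' (o *' a +' z *' c))) = -' (b *' b).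
Proof. ring. Qed.
Lemma kc (a b c d : T) : ((a *' z +' b *' z -' (z *' a +' o *' c)) *' (c *' o +' d *' z -' (z *' b +' z *' d)) -' (a *' o +' b *' z -' (z *' b +' o *' d)) *' (c *' z +' d *' z -' (z *' a +' z *' c))) = -' (c *' c).
Proof. ring. Qed.
Lemma kad (a d : T) : ((a *' z +' z *' o -' (z *' a +' o *' z)) *' (z *' o +' d *' z -' (o *' z +' z *' d)) -' (a *' o +' z *' z -' (z *' z +' o *' d)) *' (z *' z +' d *' o -' (o *' a +' z *' z))) = (a -' d) *' (a -' d).
Proof. ring. Qed.
End AbsRing.

Lemma Sring (S : comRingType) :
  @ring_theory S 0 1 +%R *%R (fun x y => x + - y) -%R eq.
Proof.
split=> //; [exact: add0r|exact: addrC|exact: addrA|exact: mul1r|exact: mulrC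
  |exact: mulrA|exact: mulrDl|exact: subrr].
Qed.

Lemma det2 (S : comRingType) (A : 'M[S]_2) :
  \det A = A ord0 ord0 * A ord_max ord_max - A ord0 ord_max * A ord_max ord0.
Proof.
rewrite (expand_det_row _ ord0) !big_ord_recl big_ord0 /cofactor !det_mx11 !mxE /=.
have -> : lift ord0 0 = ord_max :> 'I_2 by apply: val_inj.
have -> : lift ord_max 0 = ord0 :> 'I_2 by apply: val_inj.
by rewrite expr0 mul1r expr1 mulN1r addr0 mulrN.
Qed.

Lemma keyE (S : fieldType) (X Y : 'M[S]_2) :
  \det X * str Y ^+ 2 + \det Y * str X ^+ 2 + \tr (X *m Y) * str Y * str X
       - str (X *m Y) * str (Y *m X) = - \det (commx X Y).
Proof.
have L : lift ord0 ord0 = ord_max :> 'I_2 by apply: val_inj.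
rewrite !det2 /commx /str /mxtrace !big_ord_recl big_ord0 !mxE !big_ord_recl !big_ord0 ?L !addr0 !expr2.
move: (X ord0 ord0) (X ord0 ord_max) (X ord_max ord0) (X ord_max ord_max) (Y ord0 ord0) (Y ord0 ord_max) (Y ord_max ord0) (Y ord_max ord_max) => a b c d e f g h.
exact: (@keyA _ _ _ _ _ _ (Sring S)).
Qed.

Lemma part1 (S : fieldType) (X Y : 'M[S]_2) :
     commx X Y \notin unitmx <->
     \det X * str Y ^+ 2 + \det Y * str X ^+ 2 + \tr (X *m Y) * str Y * str X
       = str (X *m Y) * str (Y *m X).
Proof.
rewrite unitmxE unitfE negbK; split.
  by move/eqP=> H; apply/eqP; rewrite -subr_eq0 keyE H oppr0.
by move/eqP; rewrite -subr_eq0 keyE oppr_eq0.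
Qed.

Theorem corollary4p11 (S : fieldType) (X : 'M[S]_2) :
  (forall Y : 'M[S]_2,
     commx X Y \notin unitmx <->
     \det X * str Y ^+ 2 + \det Y * str X ^+ 2 + \tr (X *m Y) * str Y * str X
       = str (X *m Y) * str (Y *m X))
  /\
  (is_scalar_mx X <->
     forall Y : 'M[S]_2,
       \det X * str Y ^+ 2 + \det Y * str X ^+ 2 + \tr (X *m Y) * str Y * str X
         = str (X *m Y) * str (Y *m X)).
Proof.
split; first exact: part1.
split.
  move=> /is_scalar_mxP [a ->] Y; apply/part1.
  rewrite /commx scalar_mxC subrr unitmxE det0 ?unitr0 //.
move=> H.
have D0 : forall Y, \det (commx X Y) = 0.
  by move=> Y; move/part1: (H Y); rewrite unitmxE unitfE negbK => /eqP.
have L : lift ord0 ord0 = ord_max :> 'I_2 by apply: val_inj.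
have P : forall e f g h : S, (fun a b c d => ((a * e + b * g - (e * a + f * c)) * (c * f + d * h - (g * b + h * d)) - (a * f + b * h - (e * b + f * d)) * (c * e + d * g - (g * a + h * c)))) (X ord0 ord0) (X ord0 ord_max) (X ord_max ord0) (X ord_max ord_max) = 0.
  move=> e f g h /=.
  have := D0 (\matrix_(i, j) (if i == ord0 then (if j == ord0 then e else f) else (if j == ord0 then g else h))).
  rewrite det2 /commx !mxE !big_ord_recl !big_ord0 ?L !addr0 !mxE /=.
  done.
move: P; set a := X ord0 ord0; set b := X ord0 ord_max; set c := X ord_max ord0; set d := X ord_max ord_max => P.
have b0 : b = 0.
  have : - (b * b) = 0 by rewrite -(@kb _ _ _ _ _ _ (Sring S) a b c d); exact: P.
  by move/eqP; rewrite oppr_eq0 mulf_eq0 orbb => /eqP.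
have c0 : c = 0.
  have : - (c * c) = 0 by rewrite -(@kc _ _ _ _ _ _ (Sring S) a b c d); exact: P.
  by move/eqP; rewrite oppr_eq0 mulf_eq0 orbb => /eqP.
have ad : a = d.
  have : (a - d) * (a - d) = 0.
    rewrite -(@kad _ _ _ _ _ _ (Sring S) a d); move: (P 0 1 1 0); rewrite b0 c0; exact.
  by move/eqP; rewrite mulf_eq0 orbb subr_eq0 => /eqP.
apply/is_scalar_mxP; exists a; apply/matrixP => i j; rewrite !mxE.
case: i => [[|[|//]] Hi]; case: j => [[|[|//]] Hj] /=.
- by congr (X _ _); apply: val_inj.
- by rewrite mulr0n -/b -b0; congr (X _ _); apply: val_inj.
- by rewrite mulr0n -c0; congr (X _ _); apply: val_inj.
- by rewrite mulr1n ad; congr (X _ _); apply: val_inj.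
Qed.
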